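(* For $\sigma>0$ let $\mathcal H_\sigma$ denote the reproducing kernel Hilbert space of the Gaussian kernel $k_\sigma(x,y) = \exp(-\|x-y\|^2/(2\sigma^2))$ on $\mathbb R^d$, with norm $\|\cdot\|_\sigma$. If $f, g \in \mathcal H_\sigma$, then the pointwise product $fg$ satisfies $\|fg\|_{\sigma/\sqrt2} \leq \|f\|_\sigma \|g\|_\sigma$. *)

(* Defs.v *)
From HB Require Import structures.
From mathcomp Require Import all_boot all_order all_algebra.
From mathcomp Require Import all_classical all_reals all_analysis.
Set Implicit Arguments. Unset Strict Implicit. Unset Printing Implicit Defensive.
Import Order.TTheory GRing.Theory Num.Theory.
Import numFieldNormedType.Exports.
Local Open Scope classical_set_scope.
Local Open Scope ring_scope.

Section GaussRKHS.
Variables (R : realType) (d : nat).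

Definition sqdist (x y : 'rV[R]_d) : R := \sum_(i < d) (x 0 i - y 0 i) ^+ 2.

Definition gauss_kernel (s : R) (x y : 'rV[R]_d) : R :=
  expR (- (sqdist x y / (2 * s ^+ 2))).

(* Elements of the pre-Hilbert space H_0 = span {k_s(., x)}:
   finite formal combinations sum_i c_i k_s(., x_i). *)
Definition pre_elt := seq (R * 'rV[R]_d).

Definition pre_eval (s : R) (h : pre_elt) (x : 'rV[R]_d) : R :=
  \sum_(p <- h) p.1 * gauss_kernel s p.2 x.

Definition pre_norm2 (s : R) (h : pre_elt) : R :=
  \sum_(p <- h) \sum_(q <- h) p.1 * q.1 * gauss_kernel s p.2 q.2.

Definition pre_sub (h1 h2 : pre_elt) : pre_elt :=
  h1 ++ map (fun p => (- p.1, p.2)) h2.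

(* Aronszajn completion: u is an H_0-Cauchy sequence converging pointwise to f *)
Definition represents (s : R) (u : nat -> pre_elt) (f : 'rV[R]_d -> R) : Prop :=
  (forall e : R, 0 < e -> exists N : nat, forall m n : nat,
       (N <= m)%N -> (N <= n)%N -> pre_norm2 s (pre_sub (u m) (u n)) <= e)
  /\ (forall x, (fun n => pre_eval s (u n) x) @ \oo --> f x).

Definition in_rkhs (s : R) (f : 'rV[R]_d -> R) : Prop :=
  exists u, represents s u f.

(* RKHS norm: limit of the H_0-norms of an approximating Cauchy sequence
   (independent of the choice; we take the infimum over all choices). *)
Definition rkhs_norm (s : R) (f : 'rV[R]_d -> R) : R :=
  inf [set r : R | exists u, represents s u f /\
         (fun n => Num.sqrt (pre_norm2 s (u n))) @ \oo --> r].

End GaussRKHS.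

(* Main.v *)
Require Import Defs.
From HB Require Import structures.
From mathcomp Require Import all_boot all_order all_algebra.
From mathcomp Require Import all_classical all_reals all_analysis.
From mathcomp Require Import ring lra.
Import Order.TTheory GRing.Theory Num.Theory.
Import numFieldNormedType.Exports.
Local Open Scope classical_set_scope.
Local Open Scope ring_scope.


Lemma psd_pow (R : realType) (T : Type) (I : finType) (v : T -> I -> R) (h : seq (R * T)) (n : nat) :
  0 <= \sum_(p <- h) \sum_(q <- h) p.1 * q.1 * (\sum_i v p.2 i * v q.2 i) ^+ n.
Proof.
pose X (f : {ffun 'I_n -> I}) := \sum_(p <- h) p.1 * \prod_k v p.2 (f k).
have -> : \sum_(p <- h) \sum_(q <- h) p.1 * q.1 * (\sum_i v p.2 i * v q.2 i) ^+ n
   = \sum_f X f * X f.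
  under [RHS]eq_bigr => f _ do rewrite /X mulr_suml; rewrite [RHS]exchange_big /=.
  apply: eq_bigr => p _; under [RHS]eq_bigr => f _ do rewrite mulr_sumr.
  rewrite [RHS]exchange_big /=; apply: eq_bigr => q _.
  rewrite (_ : _ ^+ n = \prod_(k < n) \sum_i v p.2 i * v q.2 i); last first.
    by rewrite prodr_const card_ord.
  rewrite bigA_distr_bigA mulr_sumr; apply: eq_bigr => f _.
  by rewrite big_split /=; ring.
by apply: sumr_ge0 => f _; rewrite -expr2 sqr_ge0.
Qed.

Lemma cvg_bigsum (R : realType) (T : Type) (r : seq T) (f : T -> nat -> R) (l : T -> R) :
  (forall j, f j n @[n --> \oo] --> l j) ->
  (\sum_(j <- r) f j n) @[n --> \oo] --> \sum_(j <- r) l j.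
Proof.
move=> H; elim: r => [|j r IH].
  rewrite big_nil; under eq_fun do rewrite big_nil; exact: cvg_cst.
rewrite big_cons; under eq_fun do rewrite big_cons; exact: cvgD.
Qed.

Lemma psd_exp (R : realType) (T : Type) (I : finType) (t : R) (ht : 0 <= t) (v : T -> I -> R)
   (h : seq (R * T)) :
  0 <= \sum_(p <- h) \sum_(q <- h) p.1 * q.1 * expR (t * \sum_i v p.2 i * v q.2 i).
Proof.
set g := fun p q : R * T => \sum_i v p.2 i * v q.2 i.
pose S N := \sum_(p <- h) \sum_(q <- h) p.1 * q.1 * series (exp_coeff (t * g p q)) N.
have HS : S N @[N --> \oo] --> \sum_(p <- h) \sum_(q <- h) p.1 * q.1 * expR (t * g p q).
  apply: cvg_bigsum => p; apply: cvg_bigsum => q.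
  apply: cvgMl_tmp. exact: is_cvg_series_exp_coeff.
rewrite -(cvg_lim _ HS) //; apply: limr_ge; first exact: cvgP HS.
apply: nearW => N; rewrite /S.
have -> : \sum_(p <- h) \sum_(q <- h) p.1 * q.1 * series (exp_coeff (t * g p q)) N
   = \sum_(0 <= k < N) (t ^+ k / k`!%:R) *
       \sum_(p <- h) \sum_(q <- h) p.1 * q.1 * (g p q) ^+ k.
  under eq_bigr => p _ do under eq_bigr => q _ do rewrite /series /= mulr_sumr.
  under eq_bigr => p _ do rewrite exchange_big /=.
  rewrite exchange_big /=; apply: eq_bigr => k _.
  rewrite mulr_sumr; apply: eq_bigr => p _; rewrite mulr_sumr; apply: eq_bigr => q _.
  by rewrite /exp_coeff /= exprMn; ring.
apply: sumr_ge0 => k _; apply: mulr_ge0; last exact: psd_pow.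
by rewrite divr_ge0 // exprn_ge0.
Qed.

Lemma psd_gauss (R : realType) (T : Type) (I : finType) (c : R) (hc : 0 <= c) (v : T -> I -> R)
   (h : seq (R * T)) :
  0 <= \sum_(p <- h) \sum_(q <- h) p.1 * q.1 * expR (- (c * \sum_i (v p.2 i - v q.2 i) ^+ 2)).
Proof.
pose A (x : T) := expR (- (c * \sum_i v x i ^+ 2)).
have := @psd_exp R T I (2 * c) _ v [seq (p.1 * A p.2, p.2) | p <- h].
  rewrite mulr_ge0 // => /(_ isT).
rewrite big_map; under eq_bigr => p _ do rewrite big_map.
congr (0 <= _); apply: eq_bigr => p _; apply: eq_bigr => q _ /=.
rewrite /A.
have -> : - (c * \sum_i (v p.2 i - v q.2 i) ^+ 2) = - (c * \sum_i v p.2 i ^+ 2)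
   + - (c * \sum_i v q.2 i ^+ 2) + 2 * c * \sum_i v p.2 i * v q.2 i.
  rewrite !mulr_sumr -!sumrN -!big_split /=; apply: eq_bigr => i _; ring.
rewrite !expRD; ring.
Qed.

Set Implicit Arguments. Unset Strict Implicit.

Definition Bf (R : realType) (T : Type) (K : T -> T -> R) (h1 h2 : seq (R * T)) : R :=
  \sum_(p <- h1) \sum_(q <- h2) p.1 * q.1 * K p.2 q.2.

Definition ev (R : realType) (T : Type) (K : T -> T -> R) (h : seq (R * T)) (x : T) : R :=
  \sum_(q <- h) q.1 * K q.2 x.

Definition scl (R : realType) (T : Type) (t : R) (h : seq (R * T)) : seq (R * T) :=
  [seq (t * p.1, p.2) | p <- h].

Lemma Bf_catl (R : realType) (T : Type) (K : T -> T -> R) a b c :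
  Bf K (a ++ b) c = Bf K a c + Bf K b c.
Proof. by rewrite /Bf big_cat. Qed.

Lemma Bf_catr (R : realType) (T : Type) (K : T -> T -> R) a b c :
  Bf K c (a ++ b) = Bf K c a + Bf K c b.
Proof. by rewrite /Bf -big_split; apply: eq_bigr => p _; rewrite big_cat. Qed.

Lemma Bf_scll (R : realType) (T : Type) (K : T -> T -> R) t a c :
  Bf K (scl t a) c = t * Bf K a c.
Proof.
rewrite /Bf big_map mulr_sumr; apply: eq_bigr => p _; rewrite mulr_sumr.
by apply: eq_bigr => q _ /=; ring.
Qed.

Lemma Bf_sym (R : realType) (T : Type) (K : T -> T -> R) (Ks : forall x y, K x y = K y x) a b :
  Bf K a b = Bf K b a.
Proof.
rewrite /Bf exchange_big; apply: eq_bigr => p _; apply: eq_bigr => q _.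
by rewrite Ks; ring.
Qed.

Lemma Bf_scllr (R : realType) (T : Type) (K : T -> T -> R) (Ks : forall x y, K x y = K y x) t a c :
  Bf K c (scl t a) = t * Bf K c a.
Proof. by rewrite (Bf_sym Ks) Bf_scll (Bf_sym Ks). Qed.

Lemma Bf_ev (R : realType) (T : Type) (K : T -> T -> R) (Ks : forall x y, K x y = K y x) a b :
  Bf K a b = \sum_(p <- a) p.1 * ev K b p.2.
Proof.
rewrite /Bf /ev; apply: eq_bigr => p _; rewrite mulr_sumr; apply: eq_bigr => q _.
by rewrite Ks; ring.
Qed.

Lemma discr (R : realType) (a b c : R) :
  (forall t, 0 <= a + 2 * t * b + t ^+ 2 * c) -> 0 <= c -> b ^+ 2 <= a * c.
Proof.
move=> H c0; have a0 := H 0; rewrite !(mul0r, mulr0, expr0n, addr0) /= in a0.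
have [cz|cp] := eqVneq c 0.
  rewrite cz mulr0; have [->|bn] := eqVneq b 0; first by rewrite expr0n.
  have := H (- (a + 1) / (2 * b)); rewrite cz mulr0 addr0.
  rewrite (_ : 2 * (- (a + 1) / (2 * b)) * b = - (a + 1)); last by field; rewrite bn.
  by move=> h; exfalso; lra.
have cpos : 0 < c by rewrite lt_def cp c0.
have := H (- b / c).
rewrite (_ : a + 2 * (- b / c) * b + (- b / c) ^+ 2 * c = a - b ^+ 2 / c); last first.
  by field; rewrite cp.
rewrite subr_ge0 ler_pdivrMr // mulrC => h; exact: h.
Qed.

Lemma CS (R : realType) (T : Type) (K : T -> T -> R) (Ks : forall x y, K x y = K y x)
  (psd : forall h, 0 <= Bf K h h) a b : Bf K a b ^+ 2 <= Bf K a a * Bf K b b.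
Proof.
apply: discr => [t|//]; have := psd (a ++ scl t b).
rewrite Bf_catl !Bf_catr Bf_scll !(Bf_scllr Ks) Bf_scll (Bf_sym Ks b a).
by move=> h; apply: le_trans h _; rewrite le_eqVlt; apply/orP; left; apply/eqP; ring.
Qed.

Lemma tri (R : realType) (T : Type) (K : T -> T -> R) (Ks : forall x y, K x y = K y x)
  (psd : forall h, 0 <= Bf K h h) a b :
  Num.sqrt (Bf K (a ++ b) (a ++ b)) <= Num.sqrt (Bf K a a) + Num.sqrt (Bf K b b).
Proof.
have A0 := psd a; have B0 := psd b; have C := CS Ks psd a b.
set A := Bf K a a in A0 C *; set B := Bf K b b in B0 C *.
have sa := sqr_sqrtr A0; have sb := sqr_sqrtr B0.
have sa0 := sqrtr_ge0 A; have sb0 := sqrtr_ge0 B.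
set x := Num.sqrt A in sa sa0 *; set y := Num.sqrt B in sb sb0 *.
have -> : Bf K (a ++ b) (a ++ b) = A + 2 * Bf K a b + B.
  by rewrite Bf_catl !Bf_catr (Bf_sym Ks b a) /A /B; ring.
have xy0 : 0 <= x * y by rewrite mulr_ge0.
have C2 : Bf K a b ^+ 2 <= (x * y) ^+ 2 by rewrite exprMn sa sb.
have hb : Bf K a b <= x * y by nra.
rewrite -[leRHS]ger0_norm ?addr_ge0 // -sqrtr_sqr; apply: ler_wsqrtr; nra.
Qed.

Lemma ev_cat (R : realType) (T : Type) (K : T -> T -> R) a b x :
  ev K (a ++ b) x = ev K a x + ev K b x.
Proof. by rewrite /ev big_cat. Qed.

Definition negl (R : realType) (T : Type) (b : seq (R * T)) := [seq (- p.1, p.2) | p <- b].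

Lemma ev_negl (R : realType) (T : Type) (K : T -> T -> R) b x :
  ev K (negl b) x = - ev K b x.
Proof. by rewrite /ev big_map -sumrN; apply: eq_bigr => p _ /=; ring. Qed.

Lemma Bf_negl (R : realType) (T : Type) (K : T -> T -> R) b :
  Bf K (negl b) (negl b) = Bf K b b.
Proof.
rewrite /Bf big_map; apply: eq_bigr => p _; rewrite big_map; apply: eq_bigr => q _ /=; ring.
Qed.

Lemma Q_ext (R : realType) (T : Type) (K : T -> T -> R) (Ks : forall x y, K x y = K y x) a b :
  (forall x, ev K a x = ev K b x) -> Bf K a a = Bf K b b.
Proof.
move=> E; rewrite (Bf_ev Ks a a); under eq_bigr => p _ do rewrite E.
rewrite -(Bf_ev Ks) (Bf_sym Ks) (Bf_ev Ks); under eq_bigr => p _ do rewrite E.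
by rewrite -(Bf_ev Ks).
Qed.


Lemma sqd_sym (R : realType) (d : nat) (x y : 'rV[R]_d) : sqdist x y = sqdist y x.
Proof.
rewrite /sqdist.
apply: eq_bigr => i _.
by rewrite -sqrrN opprB.
Qed.
Lemma gk_sym (R : realType) (d : nat) (s : R) (x y : 'rV[R]_d) :
  gauss_kernel s x y = gauss_kernel s y x.
Proof. by rewrite /gauss_kernel sqd_sym. Qed.

Lemma gk_psd (R : realType) (d : nat) (s : R) (h : pre_elt R d) :
  0 <= Bf (@gauss_kernel R d s) h h.
Proof.
have := @psd_gauss R _ 'I_d (2 * s ^+ 2)^-1 _ (fun (x : 'rV[R]_d) i => x 0 i) h.
rewrite invr_ge0 mulr_ge0 ?sqr_ge0 // => /(_ isT) H; apply: le_trans H _.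
rewrite le_eqVlt; apply/orP; left; apply/eqP.
apply: eq_bigr => p _; apply: eq_bigr => q _.
by rewrite /gauss_kernel /sqdist [_^-1 * _]mulrC.
Qed.

Definition midp (R : realType) (d : nat) (x y : 'rV[R]_d) : 'rV[R]_d := 2^-1 *: (x + y).
Definition Ef (R : realType) (d : nat) (s : R) (x y : 'rV[R]_d) : R :=
  expR (- (sqdist x y / (4 * s ^+ 2))).
Definition prodl (R : realType) (d : nat) (s : R) (a b : pre_elt R d) : pre_elt R d :=
  [seq (p.1 * q.1 * Ef s p.2 q.2, midp p.2 q.2) | p : R * 'rV[R]_d <- a, q : R * 'rV[R]_d <- b].

Lemma sqrt2_sq (R : realType) (s : R) : (s / Num.sqrt 2) ^+ 2 = s ^+ 2 / 2.
Proof. by rewrite exprMn exprVn sqr_sqrtr. Qed.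

Lemma gk_mul (R : realType) (d : nat) (s : R) (hs : s != 0) (x y z : 'rV[R]_d) :
  gauss_kernel s x z * gauss_kernel s y z =
  Ef s x y * gauss_kernel (s / Num.sqrt 2) (midp x y) z.
Proof.
rewrite /gauss_kernel /Ef -!expRD sqrt2_sq; congr expR.
rewrite /sqdist !mulr_suml -!sumrN -!big_split /=; apply: eq_bigr => i _.
rewrite /midp !mxE.

field.
by rewrite hs.
Qed.

Lemma gk_sq (R : realType) (d : nat) (s : R) (x y : 'rV[R]_d) :
  gauss_kernel s x y * gauss_kernel s x y = gauss_kernel (s / Num.sqrt 2) x y.
Proof.
rewrite /gauss_kernel -expRD sqrt2_sq; congr expR.
have [->|hs] := eqVneq s 0; first by rewrite !(expr0n, mul0r, mulr0, invr0, oppr0, addr0, mul0r).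
field; by rewrite hs.
Qed.


Lemma ev_prodl (R : realType) (d : nat) (s : R) (hs : s != 0) (a b : pre_elt R d) z :
  ev (@gauss_kernel R d (s / Num.sqrt 2)) (prodl s a b) z =
  ev (@gauss_kernel R d s) a z * ev (@gauss_kernel R d s) b z.
Proof.
rewrite /ev /prodl big_allpairs_dep /= mulr_suml; apply: eq_bigr => p _.
rewrite mulr_sumr; apply: eq_bigr => q _ /=.
transitivity (p.1 * q.1 * (Ef s p.2 q.2 * gauss_kernel (s / Num.sqrt 2) (midp p.2 q.2) z)).
  by ring.
by rewrite -gk_mul //; ring.
Qed.

Definition K2 (R : realType) (d : nat) (s : R) (u w : 'rV[R]_d * 'rV[R]_d) : R :=
  gauss_kernel s u.1 w.1 * gauss_kernel s u.2 w.2.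

Lemma K2_sym (R : realType) (d : nat) (s : R) u w : @K2 R d s u w = K2 s w u.
Proof. by rewrite /K2 gk_sym [gauss_kernel s u.2 _]gk_sym. Qed.

Definition vsum (R : realType) (d : nat) (u : 'rV[R]_d * 'rV[R]_d) (i : ('I_d + 'I_d)%type) : R :=
  match i with inl j => u.1 0 j | inr j => u.2 0 j end.

Lemma K2_psd (R : realType) (d : nat) (s : R) h : 0 <= Bf (@K2 R d s) h h.
Proof.
have := @psd_gauss R _ ('I_d + 'I_d)%type (2 * s ^+ 2)^-1 _ (@vsum R d) h.
rewrite invr_ge0 mulr_ge0 ?sqr_ge0 // => /(_ isT) H; apply: le_trans H _.
rewrite le_eqVlt; apply/orP; left; apply/eqP.
apply: eq_bigr => p _; apply: eq_bigr => q _.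
rewrite /K2 /gauss_kernel /sqdist big_sumType /= -expRD; congr (_ * expR _).
by rewrite mulrDr opprD ![_^-1 * _]mulrC.
Qed.


Lemma Q_prodl (R : realType) (d : nat) (s : R) (hs : s != 0) (a b : pre_elt R d) :
  Bf (@gauss_kernel R d (s / Num.sqrt 2)) (prodl s a b) (prodl s a b) <=
  Bf (@gauss_kernel R d s) a a * Bf (@gauss_kernel R d s) b b.
Proof.
set P := prodl s a b.
pose f := [seq (p.1 * q.1, (p.2, q.2)) | p : R * 'rV[R]_d <- a, q : R * 'rV[R]_d <- b].
pose g := [seq (r.1, (r.2, r.2)) | r : R * 'rV[R]_d <- P].
have Bff : Bf (K2 s) f f = Bf (gauss_kernel s) a a * Bf (gauss_kernel s) b b.
  rewrite /Bf big_allpairs_dep.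
  under eq_bigr => p _ do under eq_bigr => q _ do rewrite big_allpairs_dep.
  rewrite mulr_suml; apply: eq_bigr => p _ /=.
  rewrite [RHS]mulr_suml; under [RHS]eq_bigr => p' _ do rewrite mulr_sumr.
  under [RHS]eq_bigr => p' _ do under eq_bigr => q _ do rewrite mulr_sumr.
  rewrite [RHS]exchange_big /=; apply: eq_bigr => q _; apply: eq_bigr => p' _.
  apply: eq_bigr => q' _ /=; rewrite /K2 /=; ring.
have Bgg : Bf (K2 s) g g = Bf (gauss_kernel (s / Num.sqrt 2)) P P.
  rewrite /Bf big_map; apply: eq_bigr => r _; rewrite big_map; apply: eq_bigr => r' _.
  by rewrite /K2 /= gk_sq.
have Bfg : Bf (K2 s) f g = Bf (gauss_kernel (s / Num.sqrt 2)) P P.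
  rewrite (Bf_sym (@K2_sym R d s)) (Bf_ev (@gk_sym R d (s / Num.sqrt 2)) P P) /Bf big_map.
  apply: eq_bigr => r _; rewrite ev_prodl // /ev big_allpairs_dep /=.
  rewrite mulr_suml mulr_sumr; apply: eq_bigr => p _; rewrite mulr_sumr mulr_sumr.
  apply: eq_bigr => q _ /=; rewrite /K2 /= [gauss_kernel s r.2 p.2]gk_sym.
  by rewrite [gauss_kernel s r.2 q.2]gk_sym; ring.
have := CS (@K2_sym R d s) (@K2_psd R d s) f g.
rewrite Bff Bgg Bfg => H.
have h0 := gk_psd (s / Num.sqrt 2) P; have ha := gk_psd s a; have hb := gk_psd s b.
have hab := mulr_ge0 ha hb.
move: H h0 hab; set Q := Bf _ P P; set X := (Bf _ a a * Bf _ b b).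
move=> H h0 hab; rewrite leNgt; apply/negP => hlt.
have qp : 0 < Q := le_lt_trans hab hlt.
have : X * Q < Q ^+ 2 by rewrite expr2 ltr_pM2r.
by rewrite ltNge H.
Qed.


Lemma cauchy_real (R : realType) (u : nat -> R) :
  (forall e : R, 0 < e -> exists N : nat, forall m n : nat,
       (N <= m)%N -> (N <= n)%N -> `|u m - u n| <= e) -> cvgn u.
Proof.
move=> H; apply/cauchy_cvgP; apply/cauchy_exP => e e0.
have [N HN] := H (e / 2) (divr_gt0 e0 (ltr0Sn _ 1)).
exists (u N); exists N => // n /= hn.
rewrite -ball_normE /ball_ /=; apply: (le_lt_trans (HN N n (leqnn N) hn)).
by rewrite ltr_pdivrMr // ltr_pMr // ltr1n.
Qed.

Definition Nn (R : realType) (d : nat) (s : R) (h : pre_elt R d) : R :=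
  Num.sqrt (Bf (@gauss_kernel R d s) h h).

Lemma ev_sub (R : realType) (d : nat) (s : R) (a b : pre_elt R d) x :
  ev (@gauss_kernel R d s) (pre_sub a b) x = ev (gauss_kernel s) a x - ev (gauss_kernel s) b x.
Proof. by rewrite /pre_sub ev_cat -/(negl b) ev_negl. Qed.

Lemma Nn_ext (R : realType) (d : nat) (s : R) (a b : pre_elt R d) :
  (forall x, ev (@gauss_kernel R d s) a x = ev (gauss_kernel s) b x) -> Nn s a = Nn s b.
Proof. by move=> E; rewrite /Nn (Q_ext (@gk_sym R d s) E). Qed.

Lemma Nn_tri (R : realType) (d : nat) (s : R) (a b : pre_elt R d) :
  Nn s (a ++ b) <= Nn s a + Nn s b.
Proof. exact: (tri (@gk_sym R d s) (@gk_psd R d s)). Qed.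

Lemma Nn_sub_sym (R : realType) (d : nat) (s : R) (a b : pre_elt R d) :
  Nn s (pre_sub a b) = Nn s (pre_sub b a).
Proof.
rewrite /Nn -[in RHS]Bf_negl; congr Num.sqrt; apply: (Q_ext (@gk_sym R d s)) => x.
by rewrite ev_negl !ev_sub opprB.
Qed.

Lemma Nn_split (R : realType) (d : nat) (s : R) (a b : pre_elt R d) :
  Nn s a <= Nn s (pre_sub a b) + Nn s b.
Proof.
rewrite (@Nn_ext R d s a (pre_sub a b ++ b)); first exact: Nn_tri.
by move=> x; rewrite ev_cat ev_sub subrK.
Qed.

Lemma Nn_ge0 (R : realType) (d : nat) (s : R) (a : pre_elt R d) : 0 <= Nn s a.
Proof. exact: sqrtr_ge0. Qed.

Lemma Nn_prodl (R : realType) (d : nat) (s : R) (hs : s != 0) (a b : pre_elt R d) :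
  Nn (s / Num.sqrt 2) (prodl s a b) <= Nn s a * Nn s b.
Proof.
by rewrite /Nn -sqrtrM ?gk_psd // ler_wsqrtr // Q_prodl.
Qed.

Lemma Nn_le (R : realType) (d : nat) (s : R) (a : pre_elt R d) (e : R) :
  0 <= e -> pre_norm2 s a <= e ^+ 2 -> Nn s a <= e.
Proof.
move=> e0 h; rewrite /Nn -[e]ger0_norm // -sqrtr_sqr; exact: ler_wsqrtr.
Qed.

Lemma le_of_Nn (R : realType) (d : nat) (s : R) (a : pre_elt R d) (e : R) :
  0 <= e -> Nn s a <= Num.sqrt e -> pre_norm2 s a <= e.
Proof. by move=> e0; rewrite /Nn ler_sqrt. Qed.


Lemma Nn_cauchy (R : realType) (d : nat) (s : R) u (f : 'rV[R]_d -> R) :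
  represents s u f -> forall e : R, 0 < e -> exists N : nat, forall m n : nat,
       (N <= m)%N -> (N <= n)%N -> Nn s (pre_sub (u m) (u n)) <= e.
Proof.
move=> [H _] e e0; have [N HN] := H (e ^+ 2) (exprn_gt0 2 e0).
by exists N => m n hm hn; apply: Nn_le; [exact: ltW | exact: HN].
Qed.

Lemma Nn_cvg (R : realType) (d : nat) (s : R) u (f : 'rV[R]_d -> R) :
  represents s u f -> cvgn (fun n => Nn s (u n)).
Proof.
move=> /Nn_cauchy H; apply: cauchy_real => e e0.
have [N HN] := H e e0; exists N => m n hm hn.
have h1 := Nn_split s (u m) (u n); have h2 := Nn_split s (u n) (u m).
have h3 := HN m n hm hn; have h4 := HN n m hn hm.
rewrite ler_norml; apply/andP; split; lra.
Qed.

Lemma Nn_bnd (R : realType) (d : nat) (s : R) u (f : 'rV[R]_d -> R) :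
  represents s u f -> exists N B, forall n, (N <= n)%N -> Nn s (u n) <= B.
Proof.
move=> /Nn_cauchy H; have [N HN] := H 1 ltr01.
exists N, (1 + Nn s (u N)) => n hn.
apply: le_trans (Nn_split s (u n) (u N)) _; rewrite lerD2r; exact: HN.
Qed.

Lemma represents_prod (R : realType) (d : nat) (s : R) (hs : s != 0) u v
  (f g : 'rV[R]_d -> R) :
  represents s u f -> represents s v g ->
  represents (s / Num.sqrt 2) (fun n => prodl s (u n) (v n)) (fun x => f x * g x).
Proof.
move=> Hu Hv; split; last first.
  move=> x; have E : (fun n => pre_eval (s / Num.sqrt 2) (prodl s (u n) (v n)) x) =
     (fun n => pre_eval s (u n) x * pre_eval s (v n) x).
    by apply/funext => n; exact: ev_prodl.
  by rewrite E; apply: cvgM; [exact: Hu.2 | exact: Hv.2].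
move=> e e0.
have [Nu1 [Bu HBu]] := Nn_bnd Hu; have [Nv1 [Bv HBv]] := Nn_bnd Hv.
pose B := 1 + `|Bu| + `|Bv|.
have B0 : 0 < B by rewrite /B; have := normr_ge0 Bu; have := normr_ge0 Bv; clear; lra.
have se0 : 0 < Num.sqrt e by rewrite sqrtr_gt0.
pose dl := Num.sqrt e / (2 * B).
have dl0 : 0 < dl by rewrite /dl divr_gt0 // mulr_gt0.
have [Nu HNu] := Nn_cauchy Hu dl0; have [Nv HNv] := Nn_cauchy Hv dl0.
exists (maxn (maxn Nu1 Nv1) (maxn Nu Nv)) => m n.
rewrite !geq_max => /andP[/andP[mu1 mv1] /andP[mu mv]] /andP[/andP[nu1 nv1] /andP[nu nv]].
apply: le_of_Nn; first exact: ltW.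
rewrite (@Nn_ext _ _ _ _ (prodl s (pre_sub (u m) (u n)) (v m) ++
                           prodl s (u n) (pre_sub (v m) (v n)))); last first.
  move=> x; rewrite ev_sub ev_cat !(ev_prodl hs) !ev_sub; ring.
apply: le_trans (Nn_tri _ _ _) _.
have p1 := Nn_prodl hs (pre_sub (u m) (u n)) (v m).
have p2 := Nn_prodl hs (u n) (pre_sub (v m) (v n)).
have a1 := HNu m n mu nu; have b1 := HBv m mv1.
have a2 := HBu n nu1; have b2 := HNv m n mv nv.
have a10 := Nn_ge0 s (pre_sub (u m) (u n)); have b10 := Nn_ge0 s (v m).
have a20 := Nn_ge0 s (u n); have b20 := Nn_ge0 s (pre_sub (v m) (v n)).
have q1 := ler_pM a10 b10 a1 b1; have q2 := ler_pM a20 b20 a2 b2.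
have nu' := ler_norm Bu; have nv' := ler_norm Bv.
have dB : dl * (2 * B) = Num.sqrt e by rewrite /dl divfK // mulf_neq0 // gt_eqF.
rewrite -dB; apply: le_trans (lerD p1 p2) _; apply: le_trans (lerD q1 q2) _.
have hBB : Bv + Bu <= 2 * B.
  rewrite /B; have := normr_ge0 Bu; have := normr_ge0 Bv; move: nu' nv'.
  clear; lra.
rewrite [Bu * dl]mulrC -mulrDr; apply: ler_wpM2l; [exact: ltW | exact: hBB].
Qed.


Lemma lim_nonneg (R : realType) (d : nat) (s : R) (u : nat -> pre_elt R d) r :
  (fun n => Nn s (u n)) @ \oo --> r -> 0 <= r.
Proof. move=> H; apply: (cvgr_to_ge H); apply: nearW => n; exact: Nn_ge0. Qed.

Lemma infM_aux (R : realType) (E : set R) (c t : R) : E !=set0 ->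
  (forall r, E r -> 0 <= r) -> 0 <= t -> (forall r, E r -> c <= t * r) -> c <= t * inf E.
Proof.
move=> [r0 Er0] E0 t0 H.
have [tz|tp] := eqVneq t 0.
  by have := H r0 Er0; rewrite tz !mul0r.
have tpos : 0 < t by rewrite lt_def tp t0.
rewrite -ler_pdivrMl //; apply: lb_le_inf; first by exists r0.
by move=> r Er; rewrite ler_pdivrMl //; exact: H.
Qed.

Unset Implicit Arguments.

Theorem theorem2 (R : realType) (d : nat) (s : R) (hs : 0 < s)
    (f g : 'rV[R]_d -> R) :
  in_rkhs s f -> in_rkhs s g ->
  in_rkhs (s / Num.sqrt 2) (fun x => f x * g x) /\
  rkhs_norm (s / Num.sqrt 2) (fun x => f x * g x)
    <= rkhs_norm s f * rkhs_norm s g.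
Proof.
move=> [u Hu] [v Hv]; have hs0 : s != 0 by rewrite gt_eqF.
split; first by exists (fun n => prodl s (u n) (v n)); exact: represents_prod.
pose S (t : R) (h : 'rV[R]_d -> R) := [set r : R | exists u, represents t u h /\
    (fun n => Num.sqrt (pre_norm2 t (u n))) @ \oo --> r].
change (inf (S (s / Num.sqrt 2) (fun x => f x * g x)) <= inf (S s f) * inf (S s g)).
set Sf := S s f; set Sg := S s g; set Sfg := S _ _.
have key : forall r1 r2, Sf r1 -> Sg r2 -> inf Sfg <= r2 * r1.
  move=> r1 r2 [u1 [Hu1 Cu1]] [v1 [Hv1 Cv1]].
  have Hw := represents_prod hs0 Hu1 Hv1.
  have cw := Nn_cvg Hw.
  have Sr3 : Sfg (lim ((fun n => Nn (s / Num.sqrt 2) (prodl s (u1 n) (v1 n))) @ \oo)).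
    by exists (fun n => prodl s (u1 n) (v1 n)); split.
  apply: le_trans (ge_inf _ Sr3) _.
    by exists 0 => y [w [_ Cw]]; exact: lim_nonneg Cw.
  have Cu1' : (fun n => Nn s (u1 n)) @ \oo --> r1 := Cu1.
  have Cv1' : (fun n => Nn s (v1 n)) @ \oo --> r2 := Cv1.
  have H1 : (fun n => Nn s (u1 n) * Nn s (v1 n) - Nn (s / Num.sqrt 2) (prodl s (u1 n) (v1 n)))
     @ \oo --> r1 * r2 - limn (fun n => Nn (s / Num.sqrt 2) (prodl s (u1 n) (v1 n))).
    apply: cvgB; [exact: (cvgM Cu1' Cv1') | exact: cw].
  rewrite [r2 * r1]mulrC -subr_ge0; apply: (cvgr_to_ge H1).
  apply: nearW => n; rewrite subr_ge0; exact: Nn_prodl.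
have Sfn : Sf !=set0 by exists (lim ((fun n => Nn s (u n)) @ \oo)); exists u; split => //; exact: Nn_cvg Hu.
have Sgn : Sg !=set0 by exists (lim ((fun n => Nn s (v n)) @ \oo)); exists v; split => //; exact: Nn_cvg Hv.
have Sf0 : forall r, Sf r -> 0 <= r by move=> r [w [_ Cw]]; exact: lim_nonneg Cw.
have Sg0 : forall r, Sg r -> 0 <= r by move=> r [w [_ Cw]]; exact: lim_nonneg Cw.
have a0 : 0 <= inf Sf by apply: lb_le_inf.
have step : forall r2, Sg r2 -> inf Sfg <= inf Sf * r2.
  move=> r2 Sr2; rewrite [inf Sf * r2]mulrC; apply: infM_aux => //; first exact: Sg0.
  by move=> r1 Sr1; exact: key.
by apply: infM_aux => //.
Qed.
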